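(* Let $\mathcal{A}$ be a fixed (non-random) countable partition of $\Theta$ into measurable sets, and let $(\theta_1,\mathbf{X}_1),\dots,(\theta_B,\mathbf{X}_B),(\theta,\mathbf{X})$ be i.i.d. pairs with $\theta_b \sim r$ and $\mathbf{X}_b\mid\theta_b$ distributed according to the statistical model at $\theta_b$. For $\theta' \in \Theta$ let $A(\theta')$ be the element of $\mathcal{A}$ containing $\theta'$, $I_{A(\theta')} = \{b : \theta_b \in A(\theta')\}$, $$\widehat H_B(t\mid\theta') = \frac{1}{|I_{A(\theta')}|+1}\Big(\sum_{b\in I_{A(\theta')}} \mathbb{I}\big(\tau(\mathbf{X}_b,\theta_b)\le t\big)+1\Big),$$ $\widehat C_{\theta',B} = \inf\{t : \widehat H_B(t\mid\theta') \ge \alpha\}$, and $\widehat R_B(\mathbf{X}) = \{\theta' \in\Theta : \tau(\mathbf{X},\theta') \ge \widehat C_{\theta',B}\}$. Then $\mathbb{P}(\theta \in \widehat R_B(\mathbf{X})) \ge 1-\alpha$.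
   Context: A statistical model gives, for each parameter $\theta\in\Theta$, a distribution of the data $\mathbf{X}\in\mathcal{X}$; $r$ is a reference probability distribution on $\Theta$; $\alpha\in(0,1)$. A fixed measurable function $\tau:\mathcal{X}\times\Theta\to\mathbb{R}$ (a test statistic) is given, and for every $\theta$ the conditional distribution of $\tau(\mathbf{X},\theta)$ given $\theta$ is continuous (has no atoms). *)

(* Defs.v *)
From HB Require Import structures.
From mathcomp Require Import all_boot all_order all_algebra.
From mathcomp Require Import all_classical all_reals all_analysis.
Set Implicit Arguments. Unset Strict Implicit. Unset Printing Implicit Defensive.
Import Order.TTheory GRing.Theory Num.Theory.
Local Open Scope classical_set_scope.
Local Open Scope ring_scope.

(* Mutual independence of a finite family of random elements Z i : Omega -> T:
   the product rule for every family of measurable sets (taking E i = setT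
   recovers every finite subfamily). *)
Definition mutually_independent (R : realType) (d : measure_display)
  (Omega : measurableType d) (P : probability Omega R)
  (I : finType) (d' : measure_display) (T : measurableType d')
  (Z : I -> Omega -> T) : Prop :=
  forall E : I -> set T, (forall i, measurable (E i)) ->
    P (\bigcap_(i in [set: I]) (Z i @^-1` E i)) =
    \big[*%E/1%E]_(i : I) P (Z i @^-1` E i).

(* A countable partition of Theta into measurable sets, indexed by nat
   (some cells may be empty). *)
Definition countable_measurable_partition (d : measure_display)
  (Theta : measurableType d) (A : nat -> set Theta) : Prop :=
  [/\ forall n, measurable (A n), trivIset setT A & \bigcup_n A n = setT].

Definition same_cell (Theta : Type) (A : nat -> set Theta) (x y : Theta) : Prop :=
  exists n, A n x /\ A n y.

Section Calibration.
Variables (R : realType) (Theta Xs : Type) (A : nat -> set Theta)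
  (tau : Xs -> Theta -> R) (B : nat) (ths : 'I_B -> Theta) (xs : 'I_B -> Xs).

Definition cell_count (th' : Theta) : nat :=
  #|[set b : 'I_B | `[< same_cell A th' (ths b) >]]|.

Definition Hhat (t : R) (th' : Theta) : R :=
  ((#|[set b : 'I_B | `[< same_cell A th' (ths b) >] &&
                      (tau (xs b) (ths b) <= t)]|)%:R + 1) /
  ((cell_count th')%:R + 1).

(* hat C_{th',B} = inf {t : hat H_B(t | th') >= alpha}, in the extended reals
   (it is -oo when the set is all of R). *)
Definition Chat (alpha : R) (th' : Theta) : \bar R :=
  ereal_inf [set t%:E | t in [set t : R | alpha <= Hhat t th']].

Definition Rhat (alpha : R) (x : Xs) : set Theta :=
  [set th' | (Chat alpha th' <= (tau x th')%:E)%E].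
End Calibration.

(* Main.v *)
Require Import Defs.
From HB Require Import structures.
From mathcomp Require Import all_boot all_order all_algebra.
From mathcomp Require Import all_classical all_reals all_analysis.
From mathcomp Require Import fingroup perm.
Import Order.TTheory GRing.Theory Num.Theory.
Local Open Scope classical_set_scope.
Local Open Scope ring_scope.


Lemma card_cset (T : finType) (f : T -> bool) :
  #|[set x | f x]| = #|[pred x | f x]|.
Proof. by apply: eq_card => x; rewrite inE; apply/idP/idP; rewrite in_setE. Qed.

Lemma card_cset_mono (T : finType) (f g : T -> bool) :
  (forall x, f x -> g x) -> (#|[set x | f x]| <= #|[set x | g x]|)%N.
Proof.
move=> fg; rewrite !card_cset; apply: subset_leq_card; apply/fintype.subsetP => x.
by rewrite !inE; apply: fg.
Qed.

Lemma card_cset_diff (T : finType) (f g : T -> bool) :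
  (#|[set x | f x]| < #|[set x | g x]|)%N -> exists x, g x && ~~ f x.
Proof.
rewrite !card_cset => h.
have : ~~ ([pred x | g x] \subset [pred x | f x]).
  by apply/negP => /subset_leq_card; rewrite leqNgt h.
by case/fintype.subsetPn => x; rewrite !inE => gx fx; exists x; rewrite gx fx.
Qed.

Lemma chatP (R : realType) (Theta Xs : Type) (A : nat -> set Theta)
  (tau : Xs -> Theta -> R) (B : nat) (ths : 'I_B -> Theta) (xs : 'I_B -> Xs)
  (alpha : R) th' (t : R) :
  (Chat A tau ths xs alpha th' <= t%:E)%E <-> alpha <= Hhat A tau ths xs t th'.
Proof.
set Cs := fun s : R => #|[set b : 'I_B | `[< same_cell A th' (ths b) >] &&
                      (tau (xs b) (ths b) <= s)]|.
have HE s : Hhat A tau ths xs s th' = ((Cs s)%:R + 1) / ((cell_count A ths th')%:R + 1) by [].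
have den0 : 0 < (cell_count A ths th')%:R + 1 :> R by rewrite ltr_wpDl.
have mono s1 s2 : (Cs s1 <= Cs s2)%N -> Hhat A tau ths xs s1 th' <= Hhat A tau ths xs s2 th'.
  move=> h; rewrite !HE ler_pM2r ?invr_gt0 // lerD2r ler_nat //.
split; last first.
  by move=> h; apply: ereal_inf_lbound; exists t.
apply: contraPP => /negP; rewrite -ltNge => Hlt.
pose K := fun b : 'I_B => `[< same_cell A th' (ths b) >] && (t < tau (xs b) (ths b)).
pose m := \big[Order.min/(t+1)]_(b | K b) tau (xs b) (ths b).
have tm : t < m by apply/bigmin_gtP; split; [rewrite ltrDl | move=> i /andP[]].
have lbm : (m%:E <= Chat A tau ths xs alpha th')%E.
  apply: le_ereal_inf_tmp => _ [s /= hs <-]; rewrite lee_fin.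
  have ts : t < s.
    rewrite ltNge; apply/negP => st.
    have : (Cs s <= Cs t)%N.
      apply: card_cset_mono => b /andP[-> h] /=.
      exact: le_trans h st.
    by move/mono; rewrite leNgt => /negP; apply; apply: lt_le_trans Hlt hs.
  have : (Cs t < Cs s)%N.
    rewrite ltnNge; apply/negP => /mono h.
    by move: (le_lt_trans (le_trans hs h) Hlt); rewrite ltxx.
  case/card_cset_diff => b /andP[/andP[cb sb] nb].
  apply: le_trans sb; apply: bigmin_le_cond; rewrite /K cb /= ltNge.
  by apply/negP => h; move: nb; rewrite cb h.
move=> h; have := le_trans lbm h; rewrite lee_fin leNgt tm //=.
Qed.
Lemma big_option_nat (T : finType) (F : option T -> nat) :
  (\sum_(j : option T) F j = F None + \sum_(b : T) F (Some b))%N.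
Proof.
rewrite (bigD1 None) //=; congr (_ + _)%N.
rewrite (reindex_omap Some id) //=.
  by apply: eq_bigl => b; rewrite eqxx.
by case=> //.
Qed.

Lemma card_pred_sum (T : finType) (f : pred T) : #|[pred x | f x]| = (\sum_x f x)%N.
Proof.
rewrite -sum1_card big_mkcond /=; apply: eq_bigr => x _; rewrite inE; by case: (f x).
Qed.

Lemma count_tperm (B : nat) (Q : pred (option 'I_B)) (i : option 'I_B) :
  (#|[set b : 'I_B | Q (tperm None i (Some b))]| + Q i)%N = #|[pred j | Q j]|.
Proof.
rewrite card_cset !card_pred_sum.
rewrite [RHS](reindex_inj (@perm_inj _ (tperm None i))) big_option_nat tpermL addnC.
done.
Qed.


Lemma fin_pred_meas d (S : measurableType d) (J : finType) (h : J -> S -> bool)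
  (F : (J -> bool) -> Prop) :
  (forall j, measurable [set z | h j z]) -> measurable [set z | F (fun j => h j z)].
Proof.
move=> mh.
have -> : [set z | F (fun j => h j z)] = \bigcup_(u in [set u : {ffun J -> bool} | F u])
    \bigcap_(j in [set: J]) [set z | h j z = u j].
  apply/seteqP; split => z /=.
    move=> Fz; exists [ffun j => h j z].
      rewrite /mkset.
      have -> : fun_of_fin [ffun j => h j z] = (fun j => h j z).
        by apply: funext => j; rewrite ffunE.
      exact: Fz.
    by move=> j _; rewrite ffunE.
  move=> [u Fu hu].
  have -> : (fun j => h j z) = fun_of_fin u by apply: funext => j; exact: hu j Logic.I.
  exact: Fu.
apply: fin_bigcup_measurable; first exact: finite_finset.
move=> u _; apply: fin_bigcap_measurable; first exact: finite_finset.
move=> j _; case: (u j); first exact: mh.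
have -> : [set z | h j z = false] = ~` [set z | h j z].
  by apply/seteqP; split => z /=; [move=> -> | move/negP/negbTE].
exact/measurableC/mh.
Qed.


Section comb.
Context (R : realType) (I : finType) (rel : I -> I -> bool) (sc : I -> R) (alpha : R).
Hypotheses (rrefl : forall i, rel i i) (rsym : forall {i j}, rel i j -> rel j i)
  (rtrans : forall {i j k}, rel i j -> rel j k -> rel i k) (alpha0 : 0 <= alpha).

Let Cnt i := #|[pred j | rel i j && (sc j <= sc i)]|.
Let N i := #|[pred j | rel i j]|.
Let miss i := (Cnt i)%:R < alpha * (N i)%:R.

Lemma N_eq i j : rel i j -> N i = N j.
Proof.
move=> rij; apply: eq_card => k; rewrite !inE; apply/idP/idP => h.
  exact: (rtrans (rsym rij) h).
by apply: rtrans rij h.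
Qed.

Lemma N_gt0 i : (0 < N i)%N.
Proof. by apply/card_gt0P; exists i; rewrite inE rrefl. Qed.

Lemma cell_bound i : (#|[pred j | rel i j && miss j]|)%:R <= alpha * (N i)%:R.
Proof.
have [j0 Pj0|] := pickP [pred j | rel i j && miss j]; last first.
  move=> h; rewrite (eq_card0 h) mulr_ge0 //.
have [jst /andP[rjs mjs] jsmax] : exists2 js', rel i js' && miss js' &
    forall j, rel i j && miss j -> sc j <= sc js'.
  by case: (@arg_maxP _ _ I j0 [pred j | rel i j && miss j] sc Pj0) => //= k Pk kmax; exists k.
have : (#|[pred j | rel i j && miss j]| <= Cnt jst)%N.
  apply: subset_leq_card; apply/fintype.subsetP => j; rewrite !inE => /andP[rj mj].
  by rewrite (rtrans (rsym rjs) rj) /= jsmax // rj mj.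
rewrite -(ler_nat R) => h; apply: (le_trans h); apply: ltW.
by rewrite (N_eq _ _ rjs); exact: mjs.
Qed.

Lemma comb_bound : (#|[pred i | miss i]|)%:R <= alpha * (#|I|)%:R.
Proof.
have E1 : (#|[pred i | miss i]|)%:R = \sum_i (miss i)%:R :> R.
  by rewrite -sum1_card natr_sum big_mkcond /=; apply: eq_bigr => i _; rewrite inE; case: (miss i).
have E2 i : \sum_(j | rel i j) (miss j)%:R = (#|[pred j | rel i j && miss j]|)%:R :> R.
  rewrite -sum1_card natr_sum [RHS]big_mkcond [LHS]big_mkcond /=.
  by apply: eq_bigr => j _; rewrite inE; case: (rel i j); case: (miss j).
have E3 : \sum_i (miss i)%:R = \sum_i ((N i)%:R^-1 * \sum_(j | rel i j) (miss j)%:R) :> R.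
  under [RHS]eq_bigr do rewrite big_distrr /=.
  rewrite [RHS](exchange_big_dep xpredT) //=.
  apply: eq_bigr => j _.
  rewrite -big_distrl /=.
  have -> : \sum_(i | rel i j) (N i)%:R^-1 = 1 :> R.
    transitivity (\sum_(i | rel j i) (N j)%:R^-1 : R).
      apply: eq_big => [i|i rij]; first by apply/idP/idP => /rsym.
      by rewrite (N_eq _ _ (rsym rij)).
    rewrite sumr_const.
    have -> : #|rel j| = N j by apply: eq_card => k; rewrite inE.
    by rewrite -[_ *+ N j]mulr_natr mulVf // pnatr_eq0 -lt0n N_gt0.
  by rewrite mul1r.
rewrite E1 E3 (_ : alpha * _ = \sum_(i : I) alpha); last first.
  by rewrite sumr_const mulr_natr; congr (_ *+ _); apply: eq_card.
apply: ler_sum => i _; rewrite E2.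
rewrite -(ler_pM2l (_ : 0 < (N i)%:R :> R)); last by rewrite ltr0n N_gt0.
rewrite mulrA mulfV ?pnatr_eq0 -?lt0n ?N_gt0 // mul1r mulrC.
exact: cell_bound.
Qed.

Lemma comb_sum : \sum_i (miss i)%:R <= alpha * (#|I|)%:R.
Proof.
apply: le_trans (comb_bound); rewrite -sum1_card natr_sum [X in _ <= X]big_mkcond /=.
rewrite le_eqVlt; apply/orP; left; apply/eqP.
by apply: eq_bigr => i _; rewrite inE; case: (miss i).
Qed.
End comb.

Lemma natmul_EFin (R : realType) (x : R) n : ((x%:E) *+ n)%R = (x *+ n)%:E.
Proof. by elim: n => // n ih; rewrite !mulrS ih. Qed.

Section gen.
Context (R : realType) (dO : measure_display) (Omega : measurableType dO)
  (P : probability Omega R).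

Lemma preimage_eq_gen d (S : measurableType d) (G : set (set S)) (f g : Omega -> S) :
  @measurable _ S = <<s G >> -> setI_closed G ->
  measurable_fun setT f -> measurable_fun setT g ->
  (forall A, G A -> P (f @^-1` A) = P (g @^-1` A)) ->
  forall A, measurable A -> P (f @^-1` A) = P (g @^-1` A).
Proof.
move=> mG GI mf mg hG A mA.
have mpf (B : set S) : measurable B -> measurable (f @^-1` B).
  by move=> mB; have := mf measurableT B mB; rewrite setTI.
have mpg (B : set S) : measurable B -> measurable (g @^-1` B).
  by move=> mB; have := mg measurableT B mB; rewrite setTI.
move: A mA; rewrite [X in forall A, X A -> _]mG.
apply: (dynkin_induction mG GI) => //.
- move=> S0 mS h; rewrite -!preimage_setC !probability_setC ?h //.
  + exact: mpg.
  + exact: mpf.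
- move=> F mF tF hF; rewrite !preimage_bigcup.
  have tr (h : Omega -> S) : trivIset setT (fun k => h @^-1` F k).
    move=> i j _ _ [w [h1 h2]]; apply: tF => //; exists (h w); split; [exact: h1|exact: h2].
  rewrite (measure_bigcup P setT (fun k => f @^-1` F k)) //; last by move=> i _; apply: mpf.
  rewrite (measure_bigcup P setT (fun k => g @^-1` F k)) //; last by move=> i _; apply: mpg.
  by apply: eq_eseriesr => n _; exact: hF.
Qed.
End gen.

Section main.
Context (R : realType) (dO : measure_display) (Omega : measurableType dO)
  (P : probability Omega R)
  (dT : measure_display) (Theta : measurableType dT)
  (dX : measure_display) (Xs : measurableType dX) (B : nat).

Let T := (Theta * Xs)%type.
Let I := option 'I_B.

Definition boxes : set (set (I -> T)) :=
  [set [set z | forall j, E j (z j)] | E in [set E : I -> set T | forall j, measurable (E j)]].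

Definition U := g_sigma_algebraType boxes.

Lemma measurableU : @measurable _ U = <<s boxes >>.
Proof. by []. Qed.

Lemma boxesI : setI_closed boxes.
Proof.
move=> _ _ [E mE <-] [F mF <-]; exists (fun j => E j `&` F j).
  by move=> j; apply: measurableI.
by apply/seteqP; split => z /=; [move=> h; split => j; case: (h j)|move=> [h1 h2] j; split].
Qed.

Lemma measurable_proj (k : I) : measurable_fun setT (fun z : U => z k).
Proof.
move=> _ E mE; rewrite setTI; apply: sub_sigma_algebra.
exists (fun j => if j == k then E else setT).
  by move=> j; case: ifP.
apply/seteqP; split => z /=.
  by move=> /(_ k); rewrite eqxx.
by move=> h j; case: ifPn => // /eqP ->.
Qed.

Lemma measurable_into_U (f : I -> Omega -> T) :
  (forall j, measurable_fun setT (f j)) ->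
  measurable_fun setT (fun w => (fun j => f j w) : U).
Proof.
move=> mf; apply: (@measurability _ _ Omega U setT _ boxes measurableU) => _ [_ [E mE <-] <-].
rewrite setTI.
have -> : (fun w => (fun j => f j w) : U) @^-1` [set z | forall j, E j (z j)] =
    \bigcap_(j in setT) (f j @^-1` E j).
  by apply/seteqP; split => w /=; [move=> h j _; exact: h|move=> h j; exact: h].
apply: fin_bigcap_measurable; first exact: finite_finset.
move=> j _.
by have := mf j measurableT _ (mE j); rewrite setTI.
Qed.

Section prob.
Context (model : R.-pker Theta ~> Xs) (r : probability Theta R)
  (th : I -> Omega -> Theta) (x : I -> Omega -> Xs)
  (hth : forall i, measurable_fun setT (th i))
  (hx : forall i, measurable_fun setT (x i))
  (hlaw : forall i (E : set Theta) (F : set Xs), measurable E -> measurable F ->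
      P (th i @^-1` E `&` x i @^-1` F) = (\int[r]_(t in E) model t F)%E)
  (hindep : mutually_independent P (fun i w => (th i w, x i w))).

Definition Zc i w : T := (th i w, x i w).
Definition Zp (s : {perm I}) : Omega -> U := fun w j => Zc (s j) w.

Lemma mZc i : measurable_fun setT (Zc i).
Proof. exact: measurable_fun_pair. Qed.

Lemma mZp s : measurable_fun setT (Zp s).
Proof. by apply: measurable_into_U => j; exact: mZc. Qed.

Lemma ident i k (E : set T) : measurable E -> P (Zc i @^-1` E) = P (Zc k @^-1` E).
Proof.
apply: (@preimage_eq_gen _ _ _ P _ _ [set A `*` B | A in measurable & B in measurable]).
- exact: measurable_prod_measurableType.
- move=> _ _ [A1 mA1 [B1 mB1 <-]] [A2 mA2 [B2 mB2 <-]].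
  exists (A1 `&` A2); first exact: measurableI.
  by exists (B1 `&` B2); [exact: measurableI|rewrite setXI].
- exact: mZc.
- exact: mZc.
- move=> _ [A mA [F mF <-]].
  have E1 j : Zc j @^-1` (A `*` F) = th j @^-1` A `&` x j @^-1` F by [].
  by rewrite !E1 !hlaw.
Qed.

Lemma box_prod (s : {perm I}) (E : I -> set T) : (forall j, measurable (E j)) ->
  P (Zp s @^-1` [set z | forall j, E j (z j)]) = (\big[*%E/1%E]_j P (Zc j @^-1` E j))%E.
Proof.
move=> mE.
have -> : Zp s @^-1` [set z | forall j, E j (z j)] =
    \bigcap_(i in [set: I]) ((fun i w => (th i w, x i w)) i @^-1` E ((s^-1)%g i)).
  apply/seteqP; split => w /=.
    by move=> h i _; have := h ((s^-1)%g i); rewrite /Zp /Zc permKV.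
  by move=> h j; have := h (s j) Logic.I; rewrite /Zp /Zc permK.
rewrite hindep; last by move=> i; exact: mE.
under eq_bigr => i _ do rewrite -/(Zc i) (ident i ((s^-1)%g i)) //.
by rewrite [RHS](reindex_inj (@perm_inj _ (s^-1)%g)).
Qed.

Lemma perm_invariant (s : {perm I}) (M : set U) : measurable M ->
  P (Zp s @^-1` M) = P (Zp 1%g @^-1` M).
Proof.
apply: (@preimage_eq_gen _ _ _ P _ U boxes).
- exact: measurableU.
- exact: boxesI.
- exact: mZp.
- exact: mZp.
- by move=> _ [E mE <-]; rewrite !box_prod.
Qed.

Section cover.
Context (A : nat -> set Theta) (tau : Xs -> Theta -> R) (alpha : R).
Definition relz (z : I -> T) i j := `[< same_cell A (z i).1 (z j).1 >].
Definition scz (z : I -> T) i := tau (z i).2 (z i).1.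
Definition cov (z : I -> T) : Prop :=
  Rhat A tau (fun b => (z (Some b)).1) (fun b => (z (Some b)).2) alpha (z None).2 (z None).1.

Lemma covE (hrefl : forall t, same_cell A t t) z i :
  cov (fun j => z (tperm None i j)) <->
  alpha <= (#|[pred j | relz z i j && (scz z j <= scz z i)]|)%:R /
           (#|[pred j | relz z i j]|)%:R.
Proof.
rewrite /cov /Rhat /=.
apply: iff_trans; first exact: chatP.
suff -> : Hhat A tau (fun b => (z (tperm None i (Some b))).1)
      (fun b => (z (tperm None i (Some b))).2)
      (tau (z (tperm None i None)).2 (z (tperm None i None)).1) (z (tperm None i None)).1 =
   (#|[pred j | relz z i j && (scz z j <= scz z i)]|)%:R /
           (#|[pred j | relz z i j]|)%:R by [].
rewrite /Hhat /cell_count tpermL.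
have Q1 : relz z i i && (scz z i <= scz z i) by rewrite /relz lexx andbT; apply/asboolP.
have Q2 : relz z i i by apply/asboolP.
rewrite -(count_tperm _ (fun j => relz z i j && (scz z j <= scz z i)) i) /= Q1.
rewrite -(count_tperm _ (fun j => relz z i j) i) /= Q2.
by rewrite !natrD.
Qed.

Lemma measurable_cov (hA : forall n, measurable (A n))
  (htau : measurable_fun setT (fun p : Xs * Theta => tau p.1 p.2)) :
  measurable ([set z : U | cov z]).
Proof.
pose hv (j : 'I_B * bool) (z : U) : bool :=
  if j.2 then scz z (Some j.1) <= scz z None else relz z None (Some j.1).
pose Fv (u : 'I_B * bool -> bool) : Prop := alpha <=
  ((#|[set b | u (b, false) && u (b, true)]|)%:R + 1) / ((#|[set b | u (b, false)]|)%:R + 1).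
have -> : [set z : U | cov z] = [set z | Fv (fun j => hv j z)].
  apply/seteqP; split => z /=.
    by move=> /chatP h; exact: h.
  by move=> h; apply/chatP; exact: h.
apply: fin_pred_meas => -[b []]; rewrite /hv /=.
  have msc k : measurable_fun setT (fun z : U => scz z k).
    have -> : (fun z : U => scz z k) =
      (fun p : Xs * Theta => tau p.1 p.2) \o (@unstable.swap Theta Xs \o (fun z : U => z k)) by [].
    apply: measurableT_comp => //; apply: measurableT_comp.
      exact: measurable_swap.
    exact: measurable_proj.
  have h := measurable_realfun.measurable_fun_ler (msc (Some b)) (msc None) measurableT.
  by have := @h [set true] Logic.I; rewrite setTI.
have -> : [set z : U | relz z None (Some b)] = \bigcup_n
   ((fun z : U => z None) @^-1` (A n `*` setT) `&` (fun z : U => z (Some b)) @^-1` (A n `*` setT)).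
  apply/seteqP; split => z /=.
    by move=> /asboolP [n [h1 h2]]; exists n.
  by move=> [n _ [h1 h2]]; apply/asboolP; exists n; split; [exact: h1.1|exact: h2.1].
apply: bigcupT_measurable => n; apply: measurableI.
  have h := measurable_proj None measurableT.
  by have := h _ (measurableX (hA n) (@measurableT _ Xs)); rewrite setTI.
have h := measurable_proj (Some b) measurableT.
by have := h _ (measurableX (hA n) (@measurableT _ Xs)); rewrite setTI.
Qed.

Lemma main_bound (halpha0 : 0 < alpha) (hA : countable_measurable_partition A)
  (htau : measurable_fun setT (fun p : Xs * Theta => tau p.1 p.2)) :
  ((1 - alpha)%:E <= P [set w | cov (fun j => Zc j w)])%E.
Proof.
case: hA => hAm htriv hcov.
have hrefl t : same_cell A t t.
  have : (\bigcup_n A n) t by rewrite hcov.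
  by case=> n _ h; exists n.
have hsym a b : same_cell A a b -> same_cell A b a by case=> n [h1 h2]; exists n.
have htrans a b c : same_cell A a b -> same_cell A b c -> same_cell A a c.
  case=> n [ha hb] [m [hb' hc]].
  have e : n = m by apply: htriv => //; exists b.
  by subst m; exists n.
have mC := measurable_cov hAm htau.
set M := ~` [set z : U | cov z].
have mM : measurable M by exact: measurableC.
have mE (s : {perm I}) : measurable (Zp s @^-1` M).
  by have := mZp s measurableT M mM; rewrite setTI.
set p := P (Zp 1%g @^-1` M).
have Ei i : P (Zp (tperm None i) @^-1` M) = p by apply: perm_invariant.
have pw w : (\sum_(i : I) (\1_(Zp (tperm None i) @^-1` M) w)%:E <= (alpha * (#|{: option 'I_B}|)%:R)%:E)%E.
  rewrite sumEFin lee_fin.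
  pose z := fun j => Zc j w.
  apply: le_trans (@comb_sum R _ (relz z) (scz z) alpha _ _ _ (ltW halpha0)); last 3 first.
  - by move=> i; apply/asboolP.
  - by move=> i j /asboolP h; apply/asboolP; exact: hsym.
  - by move=> i j k /asboolP h1 /asboolP h2; apply/asboolP; exact: htrans h1 h2.
  rewrite le_eqVlt; apply/orP; left; apply/eqP; apply: eq_bigr => i _.
  rewrite /indic; congr ((nat_of_bool _)%:R).
  have hc := covE hrefl z i.
  have N0 : (0 < #|[pred j | relz z i j]|%:R :> R).
    rewrite ltr0n; apply/card_gt0P; exists i; rewrite inE; exact/asboolP.
  rewrite (ler_pdivlMr _ _ N0) in hc.
  apply/idP/idP.
    rewrite in_setE /M /= => ncov; rewrite ltNge; apply/negP => h.
    exact/ncov/hc.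
  move=> h; rewrite in_setE /M /= => /hc; rewrite leNgt.
  move/negP; exact.
have e2 i : P (Zp (tperm None i) @^-1` M) =
    (\int[P]_(w in setT) (\1_(Zp (tperm None i) @^-1` M) w)%:E)%E.
  by rewrite integral_indic // setIT.
have hsum : (\sum_(i : I) P (Zp (tperm None i) @^-1` M) <=
    (alpha * (#|{: option 'I_B}|)%:R)%:E)%E.
  under eq_bigr do rewrite e2.
  rewrite -(@ge0_integral_sum _ _ _ P setT measurableT _
     (fun i w => (\1_(Zp (tperm None i) @^-1` M) w)%:E)); last 2 first.
  - by move=> i; apply/measurable_realfun.measurable_EFinP; exact: measurable_realfun.measurable_indic.
  - by move=> i w _; rewrite lee_fin.
  have h1 : (\int[P]_(w in setT) (\sum_(i : I) (\1_(Zp (tperm None i) @^-1` M) w)%:E)%R <=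
     \int[P]_(w in setT) (cst (alpha * (#|{: option 'I_B}|)%:R)%:E) w)%E.
    apply: ge0_le_integral.
    - exact: measurableT.
    - by move=> w _; apply: sume_ge0 => i _; rewrite lee_fin.
    - by apply: emeasurable_sum => i; apply/measurable_realfun.measurable_EFinP; exact: measurable_realfun.measurable_indic.
    - exact: measurable_cst.
    - move=> w _. exact: pw.
  apply: le_trans h1 _.
  rewrite integral_cst //; have hP1 := probability_setT P; rewrite [X in (_ * X <= _)%E]hP1 mule1 //.
rewrite (eq_bigr (fun=> p)) // sumr_const in hsum.
have pfin : p \is a fin_num.
  rewrite ge0_fin_numE ?measure_ge0 //.
  by apply: (le_lt_trans (probability_le1 _ (mE 1%g))); rewrite ltey.
set q := fine p in pfin *.
rewrite -(fineK pfin) natmul_EFin lee_fin -[fine p *+ _]mulr_natr in hsum.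
have Bpos : (0 < #|{: option 'I_B}|%:R :> R) by rewrite ltr0n card_option.
have qa : q <= alpha.
  rewrite -(ler_pM2r Bpos); apply: le_trans hsum.
  by rewrite (_ : #|xpredT| = #|{: option 'I_B}|) //; apply: eq_card.
have Z1 w : Zp 1%g w = (fun j => Zc j w) by apply: funext => j; rewrite /Zp perm1.
have -> : [set w | cov (fun j => Zc j w)] = Zp 1%g @^-1` (~` M).
  by apply/seteqP; split => w /=; rewrite Z1 /M /=; [move=> h; apply | move/contrapT].
rewrite -preimage_setC probability_setC; last exact: mE.
rewrite -/p -(fineK pfin) -/q -EFinB lee_fin.
by rewrite lerD2l lerN2.
Qed.
End cover.
End prob.
End main.


Theorem corollary1 (R : realType)
  (dO : measure_display) (Omega : measurableType dO) (P : probability Omega R)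
  (dT : measure_display) (Theta : measurableType dT)
  (dX : measure_display) (Xs : measurableType dX)
  (model : R.-pker Theta ~> Xs) (r : probability Theta R)
  (alpha : R) (halpha0 : 0 < alpha) (halpha1 : alpha < 1)
  (tau : Xs -> Theta -> R)
  (htau : measurable_fun setT (fun p : Xs * Theta => tau p.1 p.2))
  (htau_cont : forall (th0 : Theta) (t0 : R),
      model th0 [set y | tau y th0 = t0] = 0%E)
  (A : nat -> set Theta) (hA : countable_measurable_partition A)
  (B : nat)
  (* index None is the test pair (theta, X); Some b are the B calibration pairs *)
  (th : option 'I_B -> Omega -> Theta) (x : option 'I_B -> Omega -> Xs)
  (hth : forall i, measurable_fun setT (th i))
  (hx : forall i, measurable_fun setT (x i))
  (hlaw : forall i (E : set Theta) (F : set Xs), measurable E -> measurable F ->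
      P (th i @^-1` E `&` x i @^-1` F) = (\int[r]_(t in E) model t F)%E)
  (hindep : mutually_independent P (fun i w => (th i w, x i w))) :
  ((1 - alpha)%:E <=
    P [set w | Rhat A tau (fun b => th (Some b) w) (fun b => x (Some b) w)
                    alpha (x None w) (th None w)])%E.
Proof.
exact: (@main_bound R dO Omega P dT Theta dX Xs B model r th x hth hx hlaw hindep
  A tau alpha halpha0 hA htau).
Qed.
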